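(* Let $n\ge 7$ and let $S$ be a nonlocal metric basis of $W_{1,n}$ (so $S\subseteq\{0,\dots,n-1\}$ and $|S|\ge 2$). Then: (i) every gap of $S$ has at most $4$ vertices; (ii) at most one gap of $S$ has at least $3$ vertices; (iii) if a gap $A_{i,j}$ of $S$ has at least $2$ vertices, then each gap of $S$ neighboring $A_{i,j}$ (i.e., the gap of the form $A_{h,i}$ and the gap of the form $A_{j,k}$) has at most one vertex. (iv) Moreover, $W_{1,n}$ has a nonlocal metric basis $S'\subseteq\{0,\dots,n-1\}$ that satisfies (i)–(iii) and has no gap with exactly $3$ vertices.
   Context: The wheel $W_{1,n}=K_1+C_n$ has cycle vertices $0,1,\dots,n-1$ (arithmetic modulo $n$, $i$ adjacent to $i\pm1$) and a center adjacent to all of them; $d(u,v)$ is the shortest-path distance. A set $X$ of vertices resolves two vertices $u,v$ if some $x\in X$ satisfies $d(u,x)\neq d(v,x)$. $X$ is a nonlocal resolving set if it resolves every pair of distinct non-adjacent vertices; the nonlocal metric dimension is the minimum size of such a set, and a nonlocal metric basis is a nonlocal resolving set of minimum size (for $n\ge 7$ no such basis contains the center). For $X\subseteq\{0,\dots,n-1\}$ with $|X|\ge 2$, a gap of $X$ is a set $A_{i,j}=\{i+1,i+2,\dots,j-1\}$ (indices mod $n$, proceeding from $i$ in increasing direction until $j$), where $i\ne j$ are elements of $X$ such that $\{i+1,\dots,j-1\}\cap X=\emptyset$; a gap may be empty, and its number of vertices is $|A_{i,j}|$. Gaps $A_{h,i}$ and $A_{i,j}$ sharing the endpoint $i$ are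 called neighboring gaps. *)

(* Defs.v *)
From mathcomp Require Import all_boot.
Set Implicit Arguments. Unset Strict Implicit. Unset Printing Implicit Defensive.

Fixpoint reachk (T : finType) (e : rel T) (k : nat) (u v : T) : bool :=
  if k is k'.+1 then reachk e k' u v || [exists w, e u w && reachk e k' w v]
  else u == v.

(* shortest-path distance: least k <= #|T| with reachk e k u v
   (equals #|T| when v is unreachable, which never happens in a connected graph) *)
Definition dist (T : finType) (e : rel T) (u v : T) : nat :=
  find (fun k => reachk e k u v) (iota 0 #|T|).

(* vertices: Some i for the cycle vertex i (0 <= i < n), None for the center *)
Definition wvert (n : nat) := option 'I_n.

Definition cyc_adj (n : nat) (i j : 'I_n) : bool :=
  (i != j) && ((j == (i.+1 %% n) :> nat) || (i == (j.+1 %% n) :> nat)).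

Definition wheel_adj (n : nat) : rel (wvert n) :=
  fun u v => match u, v with
  | Some i, Some j => cyc_adj i j
  | None, Some _ | Some _, None => true
  | None, None => false
  end.

Definition wdist (n : nat) (u v : wvert n) : nat := dist (@wheel_adj n) u v.

Definition nonlocal_resolving (n : nat) (X : {set wvert n}) : Prop :=
  forall u v : wvert n, u != v -> ~~ wheel_adj u v ->
    exists2 x, x \in X & wdist u x != wdist v x.

Definition nonlocal_metric_basis (n : nat) (X : {set wvert n}) : Prop :=
  nonlocal_resolving X /\
  forall Y : {set wvert n}, nonlocal_resolving Y -> #|X| <= #|Y|.

Definition cstep (n : nat) (i v : 'I_n) : nat := (v + n - i) %% n.

(* A_{i,j} = {i+1, ..., j-1} (mod n) *)
Definition gapA (n : nat) (i j : 'I_n) : {set 'I_n} :=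
  [set v | (0 < cstep i v) && (cstep i v < cstep i j)].

Definition is_gap (n : nat) (X : {set 'I_n}) (i j : 'I_n) : Prop :=
  [/\ i \in X, j \in X, i != j & gapA i j :&: X = set0].

Definition gap_props (n : nat) (X : {set 'I_n}) : Prop :=
  [/\ forall i j, is_gap X i j -> #|gapA i j| <= 4,
      forall i j i' j', is_gap X i j -> is_gap X i' j' ->
         3 <= #|gapA i j| -> 3 <= #|gapA i' j'| -> i = i' /\ j = j'
    & forall i j, is_gap X i j -> 2 <= #|gapA i j| ->
         (forall h, is_gap X h i -> #|gapA h i| <= 1) /\
         (forall k, is_gap X j k -> #|gapA j k| <= 1)].

(* Main.v *)
Require Import Defs.
From mathcomp Require Import all_boot.
From mathcomp Require Import zify.
Set Implicit Arguments. Unset Strict Implicit. Unset Printing Implicit Defensive.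

Lemma modP (n x : nat) : 0 < n -> x < n + n ->
  (x < n /\ x %% n = x) \/ (n <= x /\ x %% n = x - n).
Proof.
move=> n0 hx; case: (ltnP x n) => h; [left; split=> //; exact: modn_small|].
right; split=> //. rewrite -{1}(subnK h) modnDr modn_small //; lia.
Qed.

Ltac elimmod n :=
  repeat (repeat match goal with H : context [_ %% n] |- _ => revert H end;
  match goal with
  | |- context [?x %% n] =>
      let r := fresh "r" in
      have := @modP n x ltac:(lia) ltac:(lia); generalize (x %% n);
      intros r [[? ?]|[? ?]]
  end); intros.

Lemma ord_gt0 n (i : 'I_n) : 0 < n.
Proof. by case: i => m /=; case: n. Qed.

Definition sh n (i : 'I_n) (t : nat) : 'I_n := Ordinal (ltn_pmod (i + t) (ord_gt0 i)).

Lemma val_sh n (i : 'I_n) t : val (sh i t) = (i + t) %% n.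
Proof. by []. Qed.

Lemma sh_cstep n (i v : 'I_n) : sh i (cstep i v) = v.
Proof.
apply: val_inj; rewrite val_sh /cstep. case: i v => [a ha] [b hb] /=. elimmod n; lia.
Qed.

Lemma cstep_lt n (i v : 'I_n) : cstep i v < n.
Proof. exact: ltn_pmod (ord_gt0 i). Qed.

Lemma cstep_sh n (i : 'I_n) t : t < n -> cstep i (sh i t) = t.
Proof.
move=> ht; rewrite /cstep val_sh. case: i => [c hc] /=. elimmod n; lia.
Qed.

Lemma cstep_shsh n (i : 'I_n) a b : a < n -> b < n -> cstep (sh i a) (sh i b) = (b + n - a) %% n.
Proof.
move=> ha hb; rewrite /cstep !val_sh. case: i => [c hc] /=. elimmod n; lia.
Qed.

Lemma sh_sh n (i : 'I_n) a b : sh (sh i a) b = sh i (a + b).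
Proof. by apply: val_inj; rewrite !val_sh modnDml addnA. Qed.

Lemma sh_n n (i : 'I_n) t : sh i (t + n) = sh i t.
Proof. by apply: val_inj; rewrite !val_sh addnA modnDr. Qed.

Lemma sh0 n (i : 'I_n) : sh i 0 = i.
Proof. by apply: val_inj; rewrite val_sh addn0 modn_small. Qed.

Lemma sh_inj n (i : 'I_n) a b : a < n -> b < n -> (sh i a == sh i b) = (a == b).
Proof.
move=> ha hb; apply/eqP/eqP => [/(congr1 val)|->//]; rewrite !val_sh.
case: i => [c hc] /=. elimmod n; lia.
Qed.

Definition adjn (n a b : nat) :=
  [|| b == a.+1, a == b.+1, (a == n.-1) && (b == 0) | (b == n.-1) && (a == 0)].

Lemma adj_sh n (i : 'I_n) a b : 3 <= n -> a < n -> b < n ->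
  cyc_adj (sh i a) (sh i b) = adjn n a b.
Proof.
move=> h3 ha hb; rewrite /cyc_adj /adjn -val_eqE !val_sh /=.
case: i => [c hc] /=. elimmod n; lia.
Qed.

Definition dc n (u v : 'I_n) := if u == v then 0 else if cyc_adj u v then 1 else 2.

Lemma wdistE n (u v : 'I_n) : 3 <= n -> wdist (Some u) (Some v) = dc u v.
Proof.
move=> h3; rewrite /wdist /dist card_option card_ord.
have -> : n.+1 = (n-2).+3 by lia.
have hf : forall (P : pred nat) s, find P [:: 0, 1, 2 & s] =
   if P 0 then 0 else if P 1 then 1 else if P 2 then 2 else 3 + find P s.
  by move=> P s /=; case: (P 0); case: (P 1); case: (P 2).
rewrite hf; cbv beta.
have r0 : reachk (@wheel_adj n) 0 (Some u) (Some v) = (u == v) by [].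
have r1 : reachk (@wheel_adj n) 1 (Some u) (Some v) = (u == v) || cyc_adj u v.
  rewrite /=; congr (_ || _); apply/existsP/idP => [[w /andP[h /eqP ew]]|h].
    by rewrite ew in h.
  by exists (Some v); rewrite /= h eqxx.
have r2 : reachk (@wheel_adj n) 2 (Some u) (Some v).
  rewrite /=; apply/orP; right; apply/existsP; exists None; rewrite /=.
  apply/existsP; exists (Some v); by rewrite /= eqxx.
rewrite r0 r1 r2 /dc. by case: (u == v); case: (cyc_adj u v).
Qed.

Definition R n (S : {set 'I_n}) := forall u v : 'I_n, u != v -> ~~ cyc_adj u v ->
  exists2 x, x \in S & dc u x != dc v x.

Lemma R_of_nl n (S : {set 'I_n}) : 3 <= n ->
  nonlocal_resolving [set Some i | i in S] -> R S.
Proof.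
move=> h3 H u v huv hadj.
have [x] := H (Some u) (Some v) ltac:(by []) hadj.
case/imsetP => y yS -> hy; exists y => //; by rewrite -!wdistE.
Qed.

Lemma nl_of_R n (S : {set 'I_n}) : 3 <= n ->
  R S -> nonlocal_resolving [set Some i | i in S].
Proof.
move=> h3 H [u|] [v|] //= huv hadj.
have [x xS hx] := H u v huv hadj.
exists (Some x); first by apply/imsetP; exists x.
by rewrite !wdistE.
Qed.

Definition dcn n a b := if a == b then 0 else if adjn n a b then 1 else 2.

Lemma dc_sh n (i : 'I_n) a b : 3 <= n -> a < n -> b < n ->
  dc (sh i a) (sh i b) = dcn n a b.
Proof. by move=> h3 ha hb; rewrite /dc /dcn sh_inj // adj_sh. Qed.

Ltac dsolve := rewrite /dcn /adjn /=; repeat (case: ifP => ?; rewrite /=); lia.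

Lemma shE1 n (i : 'I_n) a b c : a + b = c -> sh (sh i a) b = sh i c.
Proof. by move=> <-; rewrite sh_sh. Qed.
Lemma shE2 n (i : 'I_n) a b c : a + b = c + n -> sh (sh i a) b = sh i c.
Proof. by move=> e; rewrite sh_sh e sh_n. Qed.

Lemma neq_off n (S : {set 'I_n}) u a b : sh u a \in S -> sh u b \notin S -> a != b.
Proof. move=> h1 h2; apply/eqP => e; by rewrite -e h1 in h2. Qed.

Definition hole n (S : {set 'I_n}) u := [&& sh u (n-1) \notin S, u \notin S & sh u 1 \notin S].
Definition P1 n (S : {set 'I_n}) := forall u,
  sh u (n-1) \notin S -> u \notin S -> sh u 2 \notin S -> sh u 3 \notin S -> False.
Definition P2 n (S : {set 'I_n}) := forall u v,
  hole S u -> hole S v -> 3 <= cstep u v <= n - 3 -> False.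

Lemma R_P1 n (S : {set 'I_n}) : 7 <= n -> R S -> P1 S.
Proof.
move=> h7 HR u h1 h2 h3 h4.
have [x xS hx] := HR u (sh u 2) ltac:(rewrite -{1}(sh0 u) sh_inj; lia)
  ltac:(rewrite -{1}(sh0 u) adj_sh /adjn; lia).
rewrite -(sh_cstep u x) in xS hx; set t := cstep u x in xS hx.
have ht : t < n by exact: cstep_lt.
have hx' : dc (sh u 0) (sh u t) != dc (sh u 2) (sh u t) by rewrite sh0.
rewrite !dc_sh in hx'; try lia.
rewrite -{1}(sh0 u) in h2.
have := neq_off xS h1; have := neq_off xS h2; have := neq_off xS h3; have := neq_off xS h4.
move: hx'; dsolve.
Qed.

Lemma R_P2 n (S : {set 'I_n}) : 7 <= n -> R S -> P2 S.
Proof.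
move=> h7 HR u v /and3P[h1 h2 h3] /and3P[g1 g2 g3].
rewrite -(sh_cstep u v) in g1 g2 g3 *; set d := cstep u v in g1 g2 g3 *.
have hd : d < n by exact: cstep_lt.
clearbody d.
move=> hdr; rewrite cstep_sh // in hdr.
rewrite (shE2 _ _ (c := d - 1)) in g1; last lia.
rewrite sh_sh in g3.
have [x xS hx] := HR (sh u 0) (sh u d) ltac:(rewrite sh_inj; lia)
  ltac:(rewrite adj_sh /adjn; lia).
rewrite -(sh_cstep u x) in xS hx; set t := cstep u x in xS hx.
have ht : t < n by exact: cstep_lt.
rewrite !dc_sh in hx; try lia.
rewrite -{1}(sh0 u) in h2.
have := neq_off xS h1; have := neq_off xS h2; have := neq_off xS h3.
have := neq_off xS g1; have := neq_off xS g2; have := neq_off xS g3.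
move: hx; dsolve.
Qed.

Lemma P_R n (S : {set 'I_n}) : 7 <= n -> P1 S -> P2 S -> R S.
Proof.
move=> h7 p1 p2 u v huv hadj.
case: (boolP [exists x in S, dc u x != dc v x]) => [/existsP[x /andP[xS hx]]|];
  first by exists x.
rewrite negb_exists => /forallP H.
rewrite -(sh_cstep u v) in huv hadj H *; set d := cstep u v in huv hadj H *.
have hd : d < n by exact: cstep_lt.
clearbody d.
have Hd : forall k, k < n -> sh u k \in S -> dcn n 0 k = dcn n d k.
  move=> k hk hS; have := H (sh u k); rewrite hS /= negbK => /eqP.
  by rewrite -{1}(sh0 u) !dc_sh //; lia.
rewrite -{1}(sh0 u) sh_inj in huv; try lia.
rewrite -{1}(sh0 u) adj_sh /adjn in hadj; try lia.
have NS : forall k, k < n -> dcn n 0 k != dcn n d k -> sh u k \notin S.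
  by move=> k hk hne; apply/negP => hS; move: hne; rewrite (Hd k hk hS) eqxx.
exfalso.
have [d2|[d2|d2]] : d = 2 \/ d = n - 2 \/ 3 <= d <= n - 3 by lia.
- apply: (p1 u).
  + apply: NS; [lia|dsolve].
  + rewrite -{1}(sh0 u); apply: NS; [lia|dsolve].
  + apply: NS; [lia|dsolve].
  + apply: NS; [lia|dsolve].
- apply: (p1 (sh u d)).
  + rewrite (shE2 _ _ (c := n - 3)); last lia. apply: NS; [lia|dsolve].
  + apply: NS; [lia|dsolve].
  + rewrite (shE2 _ _ (c := 0)); last lia. apply: NS; [lia|dsolve].
  + rewrite (shE2 _ _ (c := 1)); last lia. apply: NS; [lia|dsolve].
- apply: (p2 u (sh u d)).
  + apply/and3P; split.
    * apply: NS; [lia|dsolve].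
    * rewrite -{1}(sh0 u); apply: NS; [lia|dsolve].
    * apply: NS; [lia|dsolve].
  + apply/and3P; split.
    * rewrite (shE2 _ _ (c := d - 1)); last lia. apply: NS; [lia|dsolve].
    * apply: NS; [lia|dsolve].
    * rewrite sh_sh; apply: NS; [lia|dsolve].
  + by rewrite cstep_sh.
Qed.
Lemma card_range n c : 0 < c <= n -> #|[set y : 'I_n | 0 < y < c]| = c.-1.
Proof.
move=> hc.
rewrite -sum1_card big_mkcond /=.
rewrite (eq_bigr (fun y : 'I_n => nat_of_bool (0 < y < c))); last by move=> y _; rewrite inE; case: (_ && _).
rewrite -(big_mkord xpredT (fun k => nat_of_bool (0 < k < c))).
rewrite (@big_cat_nat _ _ _ c) /=; try lia.
rewrite (@big_cat_nat _ _ _ 1 0 c) /=; try lia.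
rewrite big_nat1 /=.
rewrite (eq_big_nat _ _ (F2 := fun=> 1)); last by move=> k hk; have -> : 0 < k < c by lia.
rewrite [X in _ + X](eq_big_nat _ _ (F2 := fun=> 0)); last by move=> k /andP[hk _]; rewrite [k < c]ltnNge hk andbF.
rewrite !sum_nat_const_nat. lia.
Qed.


Lemma gap_mem n (i j : 'I_n) t : t < n -> (sh i t \in gapA i j) = (0 < t < cstep i j).
Proof. by move=> ht; rewrite inE cstep_sh. Qed.

Lemma gap_off n (S : {set 'I_n}) i j t : is_gap S i j -> 0 < t < cstep i j -> sh i t \notin S.
Proof.
case=> _ _ _ hg ht; have hn := cstep_lt i j.
apply/negP => hS; have : sh i t \in gapA i j :&: S by rewrite inE gap_mem ?hS ?ht //; lia.
by rewrite hg inE.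
Qed.

Lemma cstep_pos n (i j : 'I_n) : i != j -> 0 < cstep i j.
Proof.
move=> hij; rewrite lt0n; apply: contra hij => /eqP e.
by rewrite -(sh_cstep i j) e sh0.
Qed.

Lemma gap_card n (i j : 'I_n) : i != j -> #|gapA i j| = (cstep i j).-1.
Proof.
move=> hij.
pose f (v : 'I_n) : 'I_n := Ordinal (cstep_lt i v).
have finj : injective f.
  move=> a b /(congr1 val) /= e; by rewrite -(sh_cstep i a) e sh_cstep.
have -> : gapA i j = f @^-1: [set y : 'I_n | 0 < y < cstep i j].
  by apply/setP => v; rewrite !inE.
rewrite card_preimset // card_range //; have := cstep_pos hij; have := cstep_lt i j; lia.
Qed.

Lemma gap_j n (S : {set 'I_n}) i j : is_gap S i j -> sh i (cstep i j) \in S.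
Proof. by case=> _ hj _ _; rewrite sh_cstep. Qed.

Lemma part1 n (S : {set 'I_n}) i j : 7 <= n -> P1 S -> is_gap S i j -> #|gapA i j| <= 4.
Proof.
move=> h7 p1 hg; have [_ _ hij _] := hg; rewrite gap_card //.
rewrite leqNgt; apply/negP => hc.
apply: (p1 (sh i 2)).
- rewrite (shE1 _ _ (c := 1 + n)) ?sh_n; last lia. apply: gap_off hg _; lia.
- apply: gap_off hg _; lia.
- rewrite sh_sh; apply: gap_off hg _; lia.
- rewrite sh_sh; apply: gap_off hg _; lia.
Qed.

Lemma part3 n (S : {set 'I_n}) h i j : 7 <= n -> P1 S -> is_gap S h i -> is_gap S i j ->
  2 <= #|gapA h i| -> 2 <= #|gapA i j| -> False.
Proof.
move=> h7 p1 g1 g2; have [_ _ hhi _] := g1; have [_ _ hij _] := g2.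
rewrite !gap_card // => c1 c2.
have ei : i = sh h (cstep h i) by rewrite sh_cstep.
have hn := cstep_lt h i.
apply: (p1 (sh i (n-1))).
- rewrite sh_sh {1}ei sh_sh (_ : cstep h i + (n - 1 + (n - 1)) = (cstep h i - 2) + n + n); last lia.
  rewrite !sh_n; apply: gap_off g1 _; lia.
- rewrite {1}ei sh_sh (_ : cstep h i + (n - 1) = (cstep h i - 1) + n); last lia.
  rewrite !sh_n; apply: gap_off g1 _; lia.
- rewrite sh_sh (_ : n - 1 + 2 = 1 + n); last lia. rewrite sh_n. apply: gap_off g2 _; lia.
- rewrite sh_sh (_ : n - 1 + 3 = 2 + n); last lia. rewrite sh_n. apply: gap_off g2 _; lia.
Qed.

Lemma hole_gap n (S : {set 'I_n}) i j : 7 <= n -> is_gap S i j -> 3 <= #|gapA i j| ->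
  hole S (sh i 2).
Proof.
move=> h7 hg; have [_ _ hij _] := hg; rewrite gap_card // => hc.
apply/and3P; split.
- rewrite (shE1 _ _ (c := 1 + n)) ?sh_n; last lia. apply: gap_off hg _; lia.
- apply: gap_off hg _; lia.
- rewrite sh_sh; apply: gap_off hg _; lia.
Qed.

Lemma part2 n (S : {set 'I_n}) i j i' j' : 7 <= n -> P2 S -> is_gap S i j -> is_gap S i' j' ->
  3 <= #|gapA i j| -> 3 <= #|gapA i' j'| -> i = i' /\ j = j'.
Proof.
move=> h7 p2 g1 g2 c1 c2.
have hl1 := hole_gap h7 g1 c1; have hl2 := hole_gap h7 g2 c2.
have [iS jS hij _] := g1; have [iS' jS' hij' _] := g2.
move: c1 c2; rewrite !gap_card // => c1 c2.
case: (eqVneq i i') => [ei|hii].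
  subst i'; split=> //.
  have [lt|gt|eq] := ltngtP (cstep i j) (cstep i j').
  - by have := gap_off g2 (t := cstep i j); rewrite sh_cstep jS lt cstep_pos // => /(_ isT).
  - by have := gap_off g1 (t := cstep i j'); rewrite sh_cstep jS' gt cstep_pos // => /(_ isT).
  - by rewrite -(sh_cstep i j) eq sh_cstep.
exfalso.
have ei' : i' = sh i (cstep i i') by rewrite sh_cstep.
set d := cstep i i' in ei'; have hd : d < n by exact: cstep_lt.
have d0 : 0 < d by exact: cstep_pos.
have dc : cstep i j <= d.
  rewrite leqNgt; apply/negP => lt; move/(_ ltac:(lia)): (gap_off g1 (t := d)); by rewrite -ei' iS'.
have dc' : cstep i' j' <= n - d.
  rewrite leqNgt; apply/negP => lt; move/(_ ltac:(lia)): (gap_off g2 (t := n - d)).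
  rewrite {1}ei' sh_sh (_ : d + (n - d) = 0 + n); last lia.
  by rewrite sh_n sh0 iS.
clearbody d.
apply: (p2 (sh i 2) (sh i' 2) hl1 hl2).
rewrite ei' sh_sh cstep_shsh; try lia.
have hn := cstep_lt i j.
elimmod n; lia.
Qed.

Lemma gap_props_of n (S : {set 'I_n}) : 7 <= n -> P1 S -> P2 S -> gap_props S.
Proof.
move=> h7 p1 p2; split.
- by move=> i j; exact: part1.
- by move=> i j i' j'; exact: part2.
- move=> i j hg c; split.
  + move=> h hh; rewrite leqNgt; apply/negP => c'; exact: (part3 h7 p1 hh hg).
  + move=> k hk; rewrite leqNgt; apply/negP => c'; exact: (part3 h7 p1 hg hk).
Qed.

Lemma sh_eqm n (i : 'I_n) a b : sh i a = sh i b -> a %% n = b %% n.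
Proof. by move/(congr1 val); rewrite !val_sh => /eqP; rewrite eqn_modDl => /eqP. Qed.

Lemma off n (i x : 'I_n) : exists2 t, t < n & x = sh i t.
Proof. by exists (cstep i x); [exact: cstep_lt | rewrite sh_cstep]. Qed.

Lemma holeS n (S : {set 'I_n}) i : 7 <= n -> P2 S ->
  sh i 0 \in S -> sh i 1 \notin S -> sh i 2 \notin S -> sh i 3 \notin S -> sh i 4 \in S ->
  forall w, hole S w -> w = sh i 2.
Proof.
move=> h7 p2 f0 f1 f2 f3 f4 w hw.
have h2 : hole S (sh i 2).
  apply/and3P; split=> //; last by rewrite sh_sh.
  by rewrite (shE2 _ _ (c := 1)) //; clear -h7; lia.
have [t ht ew] := off i w; subst w.
have : ~ (3 <= cstep (sh i 2) (sh i t) <= n - 3).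
  by move=> hc; apply: (p2 _ _ h2 hw hc).
rewrite cstep_shsh //; try (clear -h7 ht; lia).
move=> hc; have : t = 0 \/ t = 1 \/ t = 2 \/ t = 3 \/ t = 4 by clear -hc ht h7; move: hc; elimmod n; lia.
case=> [e|[e|[e|[e|e]]]]; subst t => //; move: hw => /and3P[g1 g2 g3].
- by rewrite f0 in g2.
- by move: g1; rewrite sh_sh (_ : 1 + (n - 1) = 0 + n) ?sh_n ?f0 //; clear -h7; lia.
- by move: g3; rewrite sh_sh f4.
- by rewrite f4 in g2.
Qed.

Lemma inS'E n (S : {set 'I_n}) p q y : (y \in q |: (S :\ p)) = (y == q) || ((y != p) && (y \in S)).
Proof. by rewrite !inE andbC. Qed.
Lemma notS n (S : {set 'I_n}) p q y : y \notin q |: (S :\ p) -> y != p -> y \notin S.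
Proof. move=> h hp; apply/negP => hy; move: h; by rewrite inS'E hp hy orbT. Qed.
Lemma notq n (S : {set 'I_n}) p q y : y \notin q |: (S :\ p) -> y != q.
Proof. by rewrite inS'E; apply: contra => ->. Qed.
Lemma inS' n (S : {set 'I_n}) p q y : y \in S -> y != p -> y \in q |: (S :\ p).
Proof. by rewrite inS'E => -> ->; rewrite orbT. Qed.
Lemma inq n (S : {set 'I_n}) p q : q \in q |: (S :\ p).
Proof. by rewrite inS'E eqxx. Qed.

Ltac shne n h := apply/eqP => /sh_eqm; clear -h; elimmod n; lia.

Lemma card_swap n (S : {set 'I_n}) p q : p \in S -> q \notin S -> #|q |: (S :\ p)| = #|S|.
Proof.
move=> hp hq; rewrite cardsU1 (cardsD1 p S) hp !inE negb_and hq orbT /=.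
by rewrite add1n.
Qed.

Lemma fixA n (S : {set 'I_n}) i : 7 <= n -> P1 S -> P2 S ->
  sh i 0 \in S -> sh i 1 \notin S -> sh i 2 \notin S -> sh i 3 \notin S -> sh i 4 \in S ->
  sh i 5 \notin S ->
  [/\ P1 (sh i 5 |: (S :\ sh i 4)), P2 (sh i 5 |: (S :\ sh i 4)),
      #|sh i 5 |: (S :\ sh i 4)| = #|S|
    & forall h k, is_gap (sh i 5 |: (S :\ sh i 4)) h k -> #|gapA h k| != 3].
Proof.
move=> h7 p1 p2 f0 f1 f2 f3 f4 f5.
have hS := holeS h7 p2 f0 f1 f2 f3 f4.
have holeS' : forall w, hole (sh i 5 |: (S :\ sh i 4)) w -> w = sh i 2 \/ w = sh i 3.
  move=> w; have [t ht ew] := off i w; subst w.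
  case/and3P => g1 g2 g3; rewrite sh_sh in g1; rewrite sh_sh in g3.
  case: (eqVneq (sh i (t + (n-1))) (sh i 4)) => [/sh_eqm e|n1].
    have t5 : t = 5 by clear -e ht h7; move: e; elimmod n; lia.
    by subst t; rewrite inq in g2.
  case: (eqVneq (sh i t) (sh i 4)) => [/sh_eqm e|n2].
    have t4 : t = 4 by clear -e ht h7; move: e; elimmod n; lia.
    by subst t; move: g3; change (4 + 1) with 5; rewrite inq.
  case: (eqVneq (sh i (t + 1)) (sh i 4)) => [/sh_eqm e|n3].
    have t3 : t = 3 by clear -e ht h7; move: e; elimmod n; lia.
    by subst t; right.
  left; apply: hS; apply/and3P; split; rewrite ?sh_sh;
    first [exact: (notS g1 n1) | exact: (notS g2 n2) | exact: (notS g3 n3)].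
split.
- move=> u; have [t ht ew] := off i u; subst u.
  move=> g1 g2 g3 g4; rewrite sh_sh in g1; rewrite sh_sh in g3; rewrite sh_sh in g4.
  case: (eqVneq (sh i (t + (n-1))) (sh i 4)) => [/sh_eqm e|n1].
    have t5 : t = 5 by clear -e ht h7; move: e; elimmod n; lia.
    by subst t; rewrite inq in g2.
  case: (eqVneq (sh i t) (sh i 4)) => [/sh_eqm e|n2].
    have t4 : t = 4 by clear -e ht h7; move: e; elimmod n; lia.
    subst t.
    have s6 : sh i 6 \notin S by apply: notS g3 _; shne n h7.
    have s7 : sh i 7 \notin S by apply: notS g4 _; shne n h7.
    have : sh i 6 = sh i 2.
      apply: hS; apply/and3P; split=> //; last by rewrite sh_sh.
      by rewrite sh_sh (_ : 6 + (n - 1) = 5 + n) ?sh_n //; clear -h7; lia.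
    by move/sh_eqm; clear -h7; elimmod n; lia.
  case: (eqVneq (sh i (t + 2)) (sh i 4)) => [/sh_eqm e|n3].
    have t2 : t = 2 by clear -e ht h7; move: e; elimmod n; lia.
    by subst t; move: g4; change (2 + 3) with 5; rewrite inq.
  case: (eqVneq (sh i (t + 3)) (sh i 4)) => [/sh_eqm e|n4].
    have t1 : t = 1 by clear -e ht h7; move: e; elimmod n; lia.
    subst t; move: g1; rewrite (_ : 1 + (n - 1) = 0 + n) ?sh_n; last by clear -h7; lia.
    by rewrite inS' //; shne n h7.
  apply: (p1 (sh i t)); rewrite ?sh_sh;
    first [exact: (notS g1 n1) | exact: (notS g2 n2) | exact: (notS g3 n3) | exact: (notS g4 n4)].
- move=> u v hu hv.
  have : u = sh i 2 \/ u = sh i 3 by exact: holeS'.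
  have : v = sh i 2 \/ v = sh i 3 by exact: holeS'.
  by case=> ->; case=> ->; rewrite cstep_shsh //; try (clear -h7; lia); clear -h7; elimmod n; lia.
- by apply: card_swap.
- move=> h k hg; apply/eqP => c3.
  have hl := hole_gap h7 hg (eq_leq (esym c3)).
  have [hS' kS' hk _] := hg.
  have ck : cstep h k = 4 by move: c3; rewrite gap_card //; clear; lia.
  have eh : h = sh (sh h 2) (n - 2) by rewrite (shE2 _ _ (c := 0)) ?sh0 //; clear -h7; lia.
  have ek : k = sh (sh h 2) 2 by rewrite sh_sh (_ : 2 + 2 = cstep h k) ?sh_cstep // ck.
  case: (holeS' _ hl) => e; rewrite e in eh ek; rewrite sh_sh in eh; rewrite sh_sh in ek.
  + move: kS'; rewrite ek inS'E; change (2 + 2) with 4; rewrite eqxx /= ?andbF ?orbF.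
    by move/eqP/sh_eqm; clear -h7; elimmod n; lia.
  + move: hS'; rewrite eh (_ : 3 + (n - 2) = 1 + n) ?sh_n; last by clear -h7; lia.
    rewrite inS'E (negbTE f1) andbF orbF; by move/eqP/sh_eqm; clear -h7; elimmod n; lia.
Qed.

Lemma fixB n (S : {set 'I_n}) i : 7 <= n -> P1 S -> P2 S ->
  sh i 0 \in S -> sh i 1 \notin S -> sh i 2 \notin S -> sh i 3 \notin S -> sh i 4 \in S ->
  sh i 5 \in S ->
  [/\ P1 (sh i 3 |: (S :\ sh i 4)), P2 (sh i 3 |: (S :\ sh i 4)),
      #|sh i 3 |: (S :\ sh i 4)| = #|S|
    & forall h k, is_gap (sh i 3 |: (S :\ sh i 4)) h k -> #|gapA h k| != 3].
Proof.
move=> h7 p1 p2 f0 f1 f2 f3 f4 f5.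
have hS := holeS h7 p2 f0 f1 f2 f3 f4.
have s5 : sh i 5 \in sh i 3 |: (S :\ sh i 4) by apply: inS' => //; shne n h7.
have s0 : sh i 0 \in sh i 3 |: (S :\ sh i 4) by apply: inS' => //; shne n h7.
have holeS' : forall w, hole (sh i 3 |: (S :\ sh i 4)) w -> False.
  move=> w; have [t ht ew] := off i w; subst w.
  case/and3P => g1 g2 g3; rewrite sh_sh in g1; rewrite sh_sh in g3.
  case: (eqVneq (sh i (t + (n-1))) (sh i 4)) => [/sh_eqm e|n1].
    have t5 : t = 5 by clear -e ht h7; move: e; elimmod n; lia.
    by subst t; rewrite s5 in g2.
  case: (eqVneq (sh i t) (sh i 4)) => [/sh_eqm e|n2].
    have t4 : t = 4 by clear -e ht h7; move: e; elimmod n; lia.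
    subst t; move: g1; rewrite (_ : 4 + (n - 1) = 3 + n) ?sh_n ?inq //; clear -h7; lia.
  case: (eqVneq (sh i (t + 1)) (sh i 4)) => [/sh_eqm e|n3].
    have t3 : t = 3 by clear -e ht h7; move: e; elimmod n; lia.
    by subst t; rewrite inq in g2.
  have := hS (sh i t); rewrite /hole !sh_sh (notS g1 n1) (notS g2 n2) (notS g3 n3) => /(_ isT) e.
  by move: g3; rewrite -sh_sh e sh_sh; change (2 + 1) with 3; rewrite inq.
split.
- move=> u; have [t ht ew] := off i u; subst u.
  move=> g1 g2 g3 g4; rewrite sh_sh in g1; rewrite sh_sh in g3; rewrite sh_sh in g4.
  case: (eqVneq (sh i (t + (n-1))) (sh i 4)) => [/sh_eqm e|n1].
    have t5 : t = 5 by clear -e ht h7; move: e; elimmod n; lia.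
    by subst t; rewrite s5 in g2.
  case: (eqVneq (sh i t) (sh i 4)) => [/sh_eqm e|n2].
    have t4 : t = 4 by clear -e ht h7; move: e; elimmod n; lia.
    subst t; move: g1; rewrite (_ : 4 + (n - 1) = 3 + n) ?sh_n ?inq //; clear -h7; lia.
  case: (eqVneq (sh i (t + 2)) (sh i 4)) => [/sh_eqm e|n3].
    have t2 : t = 2 by clear -e ht h7; move: e; elimmod n; lia.
    by subst t; move: g4; change (2 + 3) with 5; rewrite s5.
  case: (eqVneq (sh i (t + 3)) (sh i 4)) => [/sh_eqm e|n4].
    have t1 : t = 1 by clear -e ht h7; move: e; elimmod n; lia.
    subst t; move: g1; rewrite (_ : 1 + (n - 1) = 0 + n) ?sh_n ?s0 //; clear -h7; lia.
  apply: (p1 (sh i t)); rewrite ?sh_sh;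
    first [exact: (notS g1 n1) | exact: (notS g2 n2) | exact: (notS g3 n3) | exact: (notS g4 n4)].
- by move=> u v hu; case: (holeS' _ hu).
- by apply: card_swap.
- move=> h k hg; apply/eqP => c3.
  exact: (holeS' _ (hole_gap h7 hg (eq_leq (esym c3)))).
Qed.
Unset Implicit Arguments.

Theorem lemma4p2 (n : nat) (Hn : 7 <= n) (S : {set 'I_n}) :
  nonlocal_metric_basis [set Some i | i in S] ->
  gap_props S /\
  exists S' : {set 'I_n},
    [/\ nonlocal_metric_basis [set Some i | i in S'], gap_props S'
      & forall i j, is_gap S' i j -> #|gapA i j| != 3].
Proof.
move=> [nlS minS].
have h3 : 3 <= n by lia.
have RS := R_of_nl h3 nlS.
have p1 := R_P1 Hn RS; have p2 := R_P2 Hn RS.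
split; first exact: gap_props_of.
have basis_of : forall S' : {set 'I_n}, P1 S' -> P2 S' -> #|S'| = #|S| ->
    nonlocal_metric_basis [set Some i | i in S'].
  move=> S' q1 q2 hc; split; first exact: (nl_of_R h3 (P_R Hn q1 q2)).
  move=> Y hY; rewrite card_imset; last exact: Some_inj.
  by rewrite hc -(card_imset _ (@Some_inj _)); exact: minS.
case: (boolP [exists i : 'I_n, exists j : 'I_n,
   [&& i \in S, j \in S, i != j, gapA i j :&: S == set0 & #|gapA i j| == 3]]).
- case/existsP => i /existsP [j /and5P[iS jS hij /eqP hg /eqP c3]].
  have g : is_gap S i j by split.
  have c4 : cstep i j = 4 by move: c3; rewrite gap_card //; lia.
  have f0 : sh i 0 \in S by rewrite sh0.
  have f1 : sh i 1 \notin S by apply: gap_off g _; rewrite c4.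
  have f2 : sh i 2 \notin S by apply: gap_off g _; rewrite c4.
  have f3 : sh i 3 \notin S by apply: gap_off g _; rewrite c4.
  have f4 : sh i 4 \in S by rewrite -c4 sh_cstep.
  case: (boolP (sh i 5 \in S)) => f5.
  + have [q1 q2 hc h3'] := fixB Hn p1 p2 f0 f1 f2 f3 f4 f5.
    by exists (sh i 3 |: (S :\ sh i 4)); split=> //; [exact: basis_of | exact: gap_props_of].
  + have [q1 q2 hc h3'] := fixA Hn p1 p2 f0 f1 f2 f3 f4 f5.
    by exists (sh i 5 |: (S :\ sh i 4)); split=> //; [exact: basis_of | exact: gap_props_of].
- rewrite negb_exists => /forallP H; exists S; split => //; first exact: gap_props_of.
  move=> i j [iS jS hij hg].
  have := H i; rewrite negb_exists => /forallP /(_ j).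
  by rewrite iS jS hij hg eqxx.
Qed.
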